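(* If $\eta$ is a probability measure (i.e. $\eta(\mathbb{X})=1$), then $\eta(A)=\tau(A)$ for every open set $A\subset\mathbb{X}$ with $\eta(\partial A)=0$.
   Context: $\mathbb{X}$ is a compact metric space. $(\xi_j)_{j\in\mathbb N}$ is a sequence of finitely additive outer probabilities on $\mathbb{X}$ (set functions on all subsets, values in $[0,1]$, finitely additive, $\xi_j(\mathbb{X})=1$). For $A\subset\mathbb{X}$, $\tau(A)=\limsup_{n\to\infty}\frac1n\sum_{j=0}^{n-1}\xi_j(A)$. For $Y\subset\mathbb{X}$, $r>0$, $\nu_r(Y)=\inf\sum_{I\in\mathcal I}\tau(I)$ over countable covers $\mathcal I$ of $Y$ by open sets of diameter $\le r$; $\nu(Y)=\sup_{r>0}\nu_r(Y)$; $\eta$ is the restriction of $\nu$ to Borel sets. *)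

(* Defs.v *)
From HB Require Import structures.
From mathcomp Require Import all_boot all_order all_algebra.
From mathcomp Require Import all_classical all_reals all_analysis.
Set Implicit Arguments. Unset Strict Implicit. Unset Printing Implicit Defensive.
Import Order.TTheory GRing.Theory Num.Theory.
Local Open Scope classical_set_scope.
Local Open Scope ring_scope.

Section Defs.
Context {R : realType} {X : metricType R}.

Definition fa_outer_prob (xi : nat -> set X -> R) : Prop :=
  [/\ (forall j (A : set X), 0 <= xi j A <= 1),
      (forall j (A B : set X), A `&` B = set0 -> xi j (A `|` B) = xi j A + xi j B)
    & (forall j, xi j setT = 1)].

Definition tau (xi : nat -> set X -> R) (A : set X) : \bar R :=
  limn_esup (fun n : nat => ((n%:R)^-1 * \sum_(j < n) xi j A)%:E).

Definition diam_le (I : set X) (r : R) : Prop :=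
  forall x y, I x -> I y -> mdist x y <= r.

(* nu_r(Y): infimum of sum tau(I) over countable covers of Y by open sets of
   diameter <= r (countable covers indexed by nat; finite ones padded with set0) *)
Definition nu_r (xi : nat -> set X -> R) (r : R) (Y : set X) : \bar R :=
  ereal_inf [set s : \bar R | exists I : nat -> set X,
    [/\ (forall n, open (I n)), (forall n, diam_le (I n) r),
        Y `<=` \bigcup_n I n
      & s = (\sum_(n <oo) tau xi (I n))%E]].

Definition nu (xi : nat -> set X -> R) (Y : set X) : \bar R :=
  ereal_sup [set nu_r xi r Y | r in [set r : R | 0 < r]].

Definition boundary (A : set X) : set X := closure A `\` interior A.

End Defs.

(* Main.v *)
Require Import Defs.
From HB Require Import structures.
From mathcomp Require Import all_boot all_order all_algebra.
From mathcomp Require Import all_classical all_reals all_analysis.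
From mathcomp Require Import ring lra.
Import Order.TTheory GRing.Theory Num.Theory.
Local Open Scope classical_set_scope.
Local Open Scope ring_scope.
Section CovSec.
Context {R : realType} {X : metricType R}.

Lemma cover_nat (K : set X) (P : nat -> X -> Prop) : compact K ->
  (forall x, K x -> exists2 U, nbhs x U &
     exists N0, forall x' N, U x' -> (N0 <= N)%N -> P N x') ->
  exists N, K `<=` P N.
Proof.
move=> cK HK.
have := (compact_near_coveringP K).1 cK nat \oo P _.
case.
- move=> x Kx; have [U xU [N0 HN0]] := HK x Kx.
  exists (U, [set N | (N0 <= N)%N]); first by split => //=; exists N0.
  by case=> x' N [/= Ux' HN]; exact: HN0.
- by move=> N0 _ HN0; exists N0; apply: HN0; rewrite /= leqnn.
Qed.

Lemma separation (F C : set X) : compact F -> closed C -> F `&` C = set0 ->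
  exists2 d : R, 0 < d & forall y z, F y -> C z -> d <= mdist y z.
Proof.
move=> cF cC FC.
pose P := (fun N y => forall z, C z -> N.+1%:R^-1 <= mdist y z).
have [|N HN] := @cover_nat F P cF.
  move=> y Fy.
  have yC : (~` C) y by move=> Cy; have : (F `&` C) y by []; rewrite FC.
  have /nbhs_ballP [e /= e0 He] : nbhs y (~` C).
    by apply: open_nbhs_nbhs; split => //; exact: closed_openC.
  have e20 : 0 < e / 2 by rewrite divr_gt0.
  exists (ball y (e / 2)); first by apply/nbhs_ballP; exists (e / 2).
  have [N0 _ HN0] := near_infty_natSinv_lt (PosNum e20).
  exists N0 => x' N yx' N0N z Cz.
  have Hz : ~ (mdist y z < e).
    by move=> H; apply: (He z) => //; rewrite ballEmdist.
  move: yx'; rewrite ballEmdist /= => yx'.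
  have := HN0 N N0N; rewrite /= => HN1.
  have := metric_triangle y x' z.
  move/negP: Hz; rewrite -leNgt => Hz.
  move=> Htri; move: HN1; set a := N.+1%:R^-1 => HN1; lra.
exists N.+1%:R^-1; first by rewrite invr_gt0 ltr0Sn.
by move=> y z Fy Cz; exact: HN.
Qed.

End CovSec.

Section TauSec.
Context {R : realType} {X : metricType R} (xi : nat -> set X -> R)
  (hxi : fa_outer_prob xi).

Definition avg (B : set X) (n : nat) : R := (n%:R^-1 * \sum_(j < n) xi j B).

Lemma tauE B : tau xi B =
  ereal_inf [set ereal_sup [set (avg B n)%:E | n in V] | V in \oo].
Proof. by []. Qed.

Lemma tau_le B (c : \bar R) N :
  (forall n, (N <= n)%N -> ((avg B n)%:E <= c)%E) -> (tau xi B <= c)%E.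
Proof.
move=> H; rewrite tauE; apply: (le_trans (ereal_inf_lbound _)).
  by exists [set n | (N <= n)%N]; first by exists N.
by apply: ge_ereal_sup => _ [n Hn <-]; exact: H.
Qed.

Lemma tau_ge B (c : \bar R) N :
  (forall n, (N <= n)%N -> (c <= (avg B n)%:E)%E) -> (c <= tau xi B)%E.
Proof.
move=> H; rewrite tauE; apply: le_ereal_inf_tmp => _ [V [M _ HM] <-].
apply: (le_trans (H (maxn N M) (leq_maxl _ _))).
by apply: ereal_sup_ubound; exists (maxn N M) => //; apply: HM; rewrite /= leq_maxr.
Qed.

Lemma tau_lt B (l : R) : (tau xi B < l%:E)%E ->
  exists N, forall n, (N <= n)%N -> avg B n < l.
Proof.
rewrite tauE => /ereal_inf_lt [_ [V [N _ HN] <-]] Hl.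
exists N => n Hn; rewrite -lte_fin; apply: le_lt_trans Hl.
by apply: ereal_sup_ubound; exists n => //; exact: HN.
Qed.

Lemma xi_ge0 j B : 0 <= xi j B.
Proof. by case: hxi => H _ _; case/andP: (H j B). Qed.
Lemma xi_le1 j B : xi j B <= 1.
Proof. by case: hxi => H _ _; case/andP: (H j B). Qed.
Lemma xi_add j B C : B `&` C = set0 -> xi j (B `|` C) = xi j B + xi j C.
Proof. by case: hxi => _ H _; exact: H. Qed.
Lemma xi_T j : xi j setT = 1.
Proof. by case: hxi => _ _ H; exact: H. Qed.

Lemma xi0 j : xi j set0 = 0.
Proof.
have := xi_add j set0 set0; rewrite setI0 setU0 => /(_ erefl).
by move=> H; lra.
Qed.

Lemma xi_le j B C : B `<=` C -> xi j B <= xi j C.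
Proof.
move=> BC; have -> : C = B `|` (C `\` B).
  apply/seteqP; split=> x; first by move=> Cx; have [?|?] := pselect (B x); [left|right].
  by case=> [/BC|[]].
by rewrite xi_add ?lerDl ?xi_ge0 //; rewrite setDE setICA setICr setI0.
Qed.

Lemma xi_sub j B C : xi j (B `|` C) <= xi j B + xi j C.
Proof.
have -> : B `|` C = B `|` (C `\` B).
  apply/seteqP; split=> x.
    case=> [?|?]; first by left.
    by have [?|?] := pselect (B x); [left|right].
  by case=> [?|[]]; [left|right].
rewrite xi_add; last by rewrite setDE setICA setICr setI0.
by rewrite lerD2l; apply: xi_le => x [].
Qed.

Lemma avg_ge0 B n : 0 <= avg B n.
Proof. by rewrite /avg mulr_ge0 // ?invr_ge0 // sumr_ge0 // => j _; exact: xi_ge0. Qed.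

Lemma avg_le1 B n : avg B n <= 1.
Proof.
rewrite /avg; case: n => [|n]; first by rewrite big_ord0 mulr0.
rewrite ler_pdivrMl ?ltr0Sn // mulr1.
apply: (@le_trans _ _ (\sum_(j < n.+1) (1:R))); first by apply: ler_sum => j _; exact: xi_le1.
by rewrite sumr_const card_ord.
Qed.

Lemma avg_mono B C n : B `<=` C -> avg B n <= avg C n.
Proof.
move=> BC; rewrite /avg ler_wpM2l ?invr_ge0 //.
by apply: ler_sum => j _; exact: xi_le.
Qed.

Lemma avg_sub B C n : avg (B `|` C) n <= avg B n + avg C n.
Proof.
rewrite /avg -mulrDr ler_wpM2l ?invr_ge0 // -big_split /=.
by apply: ler_sum => j _; exact: xi_sub.
Qed.

Lemma avg_compl B n : (0 < n)%N -> avg B n + avg (~` B) n = 1.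
Proof.
move=> n0; rewrite /avg -mulrDr -big_split /=.
rewrite (eq_bigr (fun _ => 1)); last first.
  by move=> j _; rewrite -xi_add ?setUv ?xi_T // setICr.
by rewrite sumr_const card_ord mulVf // pnatr_eq0 -lt0n.
Qed.

Local Open Scope ereal_scope.

Lemma tau_ge0 B : 0 <= tau xi B.
Proof. by apply: (@tau_ge _ _ 0%N) => n _; rewrite lee_fin avg_ge0. Qed.

Lemma tau_le1 B : tau xi B <= 1.
Proof. by apply: (@tau_le _ _ 0%N) => n _; rewrite lee_fin avg_le1. Qed.

Lemma tau_fin B : tau xi B = (fine (tau xi B))%:E.
Proof.
rewrite fineK // ge0_fin_numE ?tau_ge0 //.
by apply: le_lt_trans (tau_le1 B) _; exact: ltry.
Qed.

Lemma tau_mono B C : B `<=` C -> tau xi B <= tau xi C.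
Proof.
move=> BC; rewrite [tau xi C]tau_fin; apply/lee_addgt0Pr => e e0.
have [|N HN] := @tau_lt C (fine (tau xi C) + e).
  by rewrite [X in X < _]tau_fin lte_fin ltrDl.
apply: (@tau_le _ _ N) => n Hn; rewrite -EFinD lee_fin.
have := @avg_mono B C n BC; have := HN n Hn; lra.
Qed.

Lemma tau_sub B C : tau xi (B `|` C) <= tau xi B + tau xi C.
Proof.
rewrite [tau xi B]tau_fin [tau xi C]tau_fin -EFinD; apply/lee_addgt0Pr => e e0.
have [|N1 H1] := @tau_lt B (fine (tau xi B) + e / 2).
  by rewrite [X in X < _]tau_fin lte_fin ltrDl divr_gt0.
have [|N2 H2] := @tau_lt C (fine (tau xi C) + e / 2).
  by rewrite [X in X < _]tau_fin lte_fin ltrDl divr_gt0.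
apply: (@tau_le _ _ (maxn N1 N2)) => n Hn; rewrite -EFinD lee_fin.
have := H1 n (leq_trans (leq_maxl _ _) Hn).
have := H2 n (leq_trans (leq_maxr _ _) Hn).
have := avg_sub B C n; lra.
Qed.

Lemma tau_compl B : 1 <= tau xi B + tau xi (~` B).
Proof.
rewrite [tau xi B]tau_fin [tau xi (~` B)]tau_fin -EFinD lee_fin.
apply/ler_addgt0Pr => e e0.
have [|N HN] := @tau_lt (~` B) (fine (tau xi (~` B)) + e).
  by rewrite [X in X < _]tau_fin lte_fin ltrDl.
have : ((1 - fine (tau xi (~` B)) - e)%:E <= tau xi B).
  apply: (@tau_ge _ _ (maxn N 1)) => n Hn; rewrite lee_fin.
  have := HN n (leq_trans (leq_maxl _ _) Hn).
  have := @avg_compl B n (leq_trans (leq_maxr _ _) Hn); lra.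
rewrite [tau xi B]tau_fin lee_fin; lra.
Qed.

Lemma tau0 : tau xi set0 = 0.
Proof.
apply/eqP; rewrite eq_le tau_ge0 andbT.
apply: (@tau_le _ _ 0%N) => n _; rewrite /avg.
by rewrite (eq_bigr (fun _ => 0%R)) ?big1 ?mulr0 // => j _; rewrite xi0.
Qed.


Lemma tau_fin_union (I : nat -> set X) N :
  tau xi [set x | exists2 i, (i < N)%N & I i x] <= \sum_(0 <= i < N) tau xi (I i).
Proof.
elim: N => [|N IH].
  rewrite big_geq // (_ : [set x | _] = set0) ?tau0 //.
  by apply/seteqP; split => x // [].
rewrite big_nat_recr //=.
have -> : [set x | exists2 i, (i < N.+1)%N & I i x] =
    [set x | exists2 i, (i < N)%N & I i x] `|` I N.
  apply/seteqP; split=> x.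
    case=> i; rewrite ltnS leq_eqVlt => /orP[/eqP ->|iN Ix]; first by right.
    by left; exists i.
  by case=> [[i iN Ix]|Ix]; [exists i => //; exact: ltnW|exists N].
exact: le_trans (tau_sub _ _) (leeD IH (lexx _)).
Qed.

Lemma tau_compact (K : set X) (I : nat -> set X) : compact K ->
  (forall n, open (I n)) -> K `<=` \bigcup_n I n ->
  tau xi K <= \sum_(n <oo) tau xi (I n).
Proof.
move=> cK oI KI.
have [|N HN] := @cover_nat R X K (fun N x => exists2 i, (i < N)%N & I i x) cK.
  move=> x Kx; have [i _ Iix] := KI x Kx.
  exists (I i); first by apply: open_nbhs_nbhs; split.
  by exists i.+1 => x' M Ix' iM; exists i.
apply: (le_trans (@tau_mono K _ HN)); apply: (le_trans (tau_fin_union I N)).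
by apply: nneseries_lim_ge => n _ _; exact: tau_ge0.
Qed.

End TauSec.

Lemma sum_ileave {R : realType} (f g : nat -> \bar R) :
  (forall n, (0 <= f n)%E) -> (forall n, (0 <= g n)%E) ->
  (\sum_(n <oo) (if odd n then g n./2 else f n./2) <=
   \sum_(n <oo) f n + \sum_(n <oo) g n)%E.
Proof.
move=> f0 g0; set h := fun n => if odd n then g n./2 else f n./2.
have h0 n : (0 <= h n)%E by rewrite /h; case: ifP.
have Hp n : (\sum_(0 <= i < n.*2) h i = \sum_(0 <= i < n) f i + \sum_(0 <= i < n) g i)%E.
  elim: n => [|n IH]; first by rewrite !big_geq // adde0.
  rewrite doubleS !big_nat_recr //= IH /h /= odd_double /= doubleK uphalf_double.
  by rewrite -addeA addeACA.
apply: lime_le; first by apply: is_cvg_nneseries => k _ _; exact: h0.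
apply: nearW => n.
apply: (@le_trans _ _ (\sum_(0 <= i < n.*2) h i)%E).
  apply: ereal_nondecreasing_series => //; first by move=> *; exact: h0.
  by rewrite -addnn leq_addr.
rewrite Hp; apply: leeD; apply: nneseries_lim_ge => //.
Qed.

Section NuSec.
Context {R : realType} {X : metricType R} (xi : nat -> set X -> R)
  (hxi : fa_outer_prob xi).
Local Open Scope ereal_scope.

Definition ilv (I J : nat -> set X) n := if odd n then J n./2 else I n./2.

Lemma ilv_open I J : (forall n, open (I n)) -> (forall n, open (J n)) ->
  forall n, open (ilv I J n).
Proof. by move=> oI oJ n; rewrite /ilv; case: ifP. Qed.

Lemma ilv_diam I J (r : R) : (forall n, diam_le (I n) r) ->
  (forall n, diam_le (J n) r) -> forall n, diam_le (ilv I J n) r.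
Proof. by move=> oI oJ n; rewrite /ilv; case: ifP. Qed.

Lemma ilv_cover I J : (\bigcup_n I n) `|` (\bigcup_n J n) `<=` \bigcup_n ilv I J n.
Proof.
move=> x [[n _ Ix]|[n _ Jx]].
  by exists n.*2 => //; rewrite /ilv odd_double doubleK.
by exists n.*2.+1 => //; rewrite /ilv /= odd_double /= uphalf_double.
Qed.

Lemma ilv_sum I J : \sum_(n <oo) tau xi (ilv I J n) <=
  \sum_(n <oo) tau xi (I n) + \sum_(n <oo) tau xi (J n).
Proof.
rewrite (@eq_eseriesr _ _ (fun n => if odd n then tau xi (J n./2) else tau xi (I n./2))).
  by apply: sum_ileave => n; exact: tau_ge0.
by move=> n _; rewrite /ilv; case: ifP.
Qed.

Lemma tau_compact2 (K : set X) (I J : nat -> set X) : compact K ->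
  (forall n, open (I n)) -> (forall n, open (J n)) ->
  K `<=` (\bigcup_n I n) `|` (\bigcup_n J n) ->
  tau xi K <= \sum_(n <oo) tau xi (I n) + \sum_(n <oo) tau xi (J n).
Proof.
move=> cK oI oJ KIJ; apply: le_trans (ilv_sum I J).
apply: tau_compact => //; first exact: ilv_open.
exact: subset_trans KIJ (@ilv_cover I J).
Qed.

Lemma nu_r_le (r : R) (Y : set X) (I : nat -> set X) :
  (forall n, open (I n)) -> (forall n, diam_le (I n) r) ->
  Y `<=` \bigcup_n I n -> nu_r xi r Y <= \sum_(n <oo) tau xi (I n).
Proof. by move=> oI dI YI; apply: ereal_inf_lbound; exists I. Qed.

Lemma nu_r_le2 (r : R) (Y : set X) (I J : nat -> set X) :
  (forall n, open (I n)) -> (forall n, diam_le (I n) r) ->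
  (forall n, open (J n)) -> (forall n, diam_le (J n) r) ->
  Y `<=` (\bigcup_n I n) `|` (\bigcup_n J n) ->
  nu_r xi r Y <= \sum_(n <oo) tau xi (I n) + \sum_(n <oo) tau xi (J n).
Proof.
move=> oI dI oJ dJ YIJ; apply: le_trans (ilv_sum I J).
apply: nu_r_le; [exact: ilv_open|exact: ilv_diam|].
exact: subset_trans YIJ (@ilv_cover I J).
Qed.

Lemma nu_r_le_nu (r : R) (Y : set X) : (0 < r)%R -> nu_r xi r Y <= nu xi Y.
Proof. by move=> r0; apply: ereal_sup_ubound; exists r. Qed.

End NuSec.

Lemma diam_le0 {R : realType} {X : metricType R} (r : R) : diam_le (@set0 X) r.
Proof. by move=> x y []. Qed.

Theorem mainTheorem14 (R : realType) (X : metricType R)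
  (hX : compact [set: X]) (xi : nat -> set X -> R) (hxi : fa_outer_prob xi)
  (hprob : nu xi [set: X] = 1%E) (A : set X) (hA : open A)
  (hbd : nu xi (boundary A) = 0%E) :
  nu xi A = tau xi A.
Proof.
have cF : closed (~` A) := open_closedC hA.
have cptF : compact (~` A) := subclosed_compact cF hX (@subsetT _ _).
have clA : closure A `<=` A `|` boundary A.
  move=> x cx; have [Ax|nAx] := pselect (A x); first by left.
  by right; split => // /interior_subset.
apply/eqP; rewrite eq_le; apply/andP; split; last first.
  apply/lee_addgt0Pr => e e0.
  have /ereal_inf_lt [_ [J [oJ dJ cJ ->]] sJ] : (nu_r xi 1 (boundary A) < e%:E)%E.
    by apply: le_lt_trans (nu_r_le_nu xi _ _ ltr01) _; rewrite hbd lte_fin.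
  apply: (@le_trans _ _ (nu_r xi 1 A + e%:E)%E); last first.
    by apply: leeD => //; exact: nu_r_le_nu.
  rewrite -leeBlDr //; apply: le_ereal_inf_tmp => _ [I [oI dI cI ->]].
  rewrite leeBlDr //.
  have cptcl : compact (closure A).
    exact: subclosed_compact (@closed_closure _ A) hX (@subsetT _ _).
  apply: (le_trans (@tau_mono _ _ xi hxi A (closure A) (@subset_closure _ A))).
  apply: (le_trans (@tau_compact2 _ _ xi hxi _ I J cptcl oI oJ _)).
    move=> x /clA [/cI Ix|/cJ Jx]; [by left|by right].
  by apply: leeD => //; exact: ltW.
apply: ge_ereal_sup => _ [r /= r0 <-].
apply/lee_addgt0Pr => e e0.
have e30 : (0 < e / 3)%R by rewrite divr_gt0.
have /ereal_inf_lt [_ [J [oJ dJ cJ ->]] sJ] : (nu_r xi r (boundary A) < (e / 3)%:E)%E.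
  by apply: le_lt_trans (nu_r_le_nu xi _ _ r0) _; rewrite hbd lte_fin.
pose U := \bigcup_n J n.
have oU : open U by apply: bigcup_open => n _; exact: oJ.
pose C := closure A `&` ~` U.
have cC : closed C by apply: closedI; [exact: closed_closure|exact: open_closedC].
have FC : ~` A `&` C = set0.
  apply/seteqP; split => // x [nAx [clx nUx]]; apply: nUx; apply: cJ.
  by split => // /interior_subset.
have [d d0 Hd] := @separation _ _ (~` A) C cptF cC FC.
pose rho := Num.min r (d / 2).
have rho0 : (0 < rho)%R by rewrite lt_min r0 divr_gt0.
have rhor : (rho <= r)%R by rewrite ge_min lexx.
have rhod : (rho <= d / 2)%R by rewrite ge_min lexx orbT.
have /ereal_inf_lt [_ [I [oI dI cI ->]] sI] : (nu_r xi rho [set: X] < (1 + e / 3)%:E)%E.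
  apply: le_lt_trans (nu_r_le_nu xi _ _ rho0) _.
  by rewrite hprob lte_fin ltrDl.
pose I1 n := if pselect (I n `&` ~` A = set0) then I n else set0.
pose I2 n := if pselect (I n `&` ~` A = set0) then set0 else I n.
have oI1 n : open (I1 n) by rewrite /I1; case: (pselect (I n `&` ~` A = set0)) => H //=; exact: open0.
have oI2 n : open (I2 n) by rewrite /I2; case: (pselect (I n `&` ~` A = set0)) => H //=; exact: open0.
have dI1 n : diam_le (I1 n) r.
  rewrite /I1; case: (pselect (I n `&` ~` A = set0)) => H /=; last exact: diam_le0.
  by move=> x y Ix Iy; apply: le_trans (dI n x y Ix Iy) rhor.
have tI n : tau xi (I n) = (tau xi (I1 n) + tau xi (I2 n))%E.
  by rewrite /I1 /I2; case: (pselect (I n `&` ~` A = set0)) => H /=; rewrite (@tau0 _ _ xi hxi) ?adde0 ?add0e.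
have sumI : (\sum_(n <oo) tau xi (I n) =
    \sum_(n <oo) tau xi (I1 n) + \sum_(n <oo) tau xi (I2 n))%E.
  rewrite (@eq_eseriesr _ _ (fun n => tau xi (I1 n) + tau xi (I2 n))%E);
    last by move=> n _; exact: tI.
  by apply: nneseriesD => n _ _; exact: tau_ge0.
have tF : (tau xi (~` A) <= \sum_(n <oo) tau xi (I2 n))%E.
  apply: (@tau_compact _ _ xi hxi _ _ cptF oI2) => x Fx.
  have [n _ Ix] := cI x Logic.I; exists n => //; rewrite /I2.
  case: (pselect (I n `&` ~` A = set0)) => H /=; last by [].
  have K : (I n `&` ~` A) x by split.
  by move: K; rewrite H.
have cA : A `<=` (\bigcup_n I1 n) `|` (\bigcup_n J n).
  move=> x Ax; have [Ux|nUx] := pselect (U x); first by right.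
  left; have [n _ Ix] := cI x Logic.I; exists n => //; rewrite /I1.
  case: (pselect (I n `&` ~` A = set0)) => H //=; exfalso.
  have /set0P [y [Iy Fy]] : I n `&` ~` A != set0 by apply/eqP.
  have := Hd y x Fy (conj (@subset_closure _ A x Ax) nUx).
  have := dI n y x Iy Ix; lra.
have HA := @nu_r_le2 _ _ xi hxi _ _ _ _ oI1 dI1 oJ dJ cA.
set q1 := (\sum_(n <oo) tau xi (I1 n))%E in sumI HA.
set q2 := (\sum_(n <oo) tau xi (I2 n))%E in sumI tF.
set qJ := (\sum_(n <oo) tau xi (J n))%E in sJ HA.
have q10 : (0 <= q1)%E by apply: nneseries_ge0 => n _ _; exact: tau_ge0.
have q20 : (0 <= q2)%E by apply: nneseries_ge0 => n _ _; exact: tau_ge0.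
have qJ0 : (0 <= qJ)%E by apply: nneseries_ge0 => n _ _; exact: tau_ge0.
rewrite sumI in sI.
have q1E : q1 = (fine q1)%:E.
  rewrite fineK // ge0_fin_numE //; apply: le_lt_trans (lt_le_trans sI (leey _)) => //.
  by rewrite leeDl.
have q2E : q2 = (fine q2)%:E.
  rewrite fineK // ge0_fin_numE //; apply: le_lt_trans (lt_le_trans sI (leey _)) => //.
  by rewrite leeDr.
have qJE : qJ = (fine qJ)%:E.
  by rewrite fineK // ge0_fin_numE //; exact: lt_trans sJ (ltry _).
have Hc := @tau_compl _ _ xi hxi A.
rewrite [tau xi A](@tau_fin _ _ xi hxi) [tau xi (~` A)](@tau_fin _ _ xi hxi) -EFinD lee_fin in Hc.
rewrite q2E [tau xi (~` A)](@tau_fin _ _ xi hxi) lee_fin in tF.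
rewrite q1E q2E -EFinD lte_fin in sI.
rewrite qJE lte_fin in sJ.
apply: (le_trans HA); rewrite q1E qJE [tau xi A](@tau_fin _ _ xi hxi) -!EFinD lee_fin.
lra.
Qed.
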